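(* For every integer $n\ge 0$, $c_1(n)$ is odd if and only if $n=j(j+1)/2$ for some integer $j\ge 0$.
   Context: A partition of $n\ge 0$ is a finite multiset of positive integers (its parts) summing to $n$; the empty partition is the unique partition of $0$. For $n\ge 0$, $c_1(n)$ denotes the number of partitions $\lambda$ of $n$ such that either (a) all parts of $\lambda$ are distinct, or (b) there is an integer $j\ge 1$ such that each of the integers $1,2,\dots,2j-1$ appears in $\lambda$ at least twice, and every integer greater than $2j$ appears in $\lambda$ at most once (the integer $2j$ may appear any number of times, including zero). *)

(* Defs.v *)
From mathcomp Require Import all_boot.
Set Implicit Arguments. Unset Strict Implicit. Unset Printing Implicit Defensive.

(* A partition of n is encoded by its multiplicity function:
   m : {ffun 'I_n -> nat}, where m i is the number of times the part (i+1)
   appears.  Parts of a partition of n are at most n, so this covers all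
   partitions; the encoding is bijective onto { m | \sum_i (i+1) * m i = n }.
   Multiplicities are bounded by n, so we use 'I_n.+1 as codomain to get a
   finite type. *)
Definition mtype (n : nat) := {ffun 'I_n -> 'I_n.+1}.

(* multiplicity of the positive integer k in the partition m (0 if k > n or k = 0) *)
Definition mult (n : nat) (m : mtype n) (k : nat) : nat :=
  match insub k.-1 with
  | Some i => if k is 0 then 0 else nat_of_ord (m i)
  | None => 0
  end.

Definition is_partition (n : nat) (m : mtype n) : bool :=
  \sum_(i < n) (i.+1 * m i) == n.

Definition all_distinct (n : nat) (m : mtype n) : bool :=
  [forall i : 'I_n, m i <= 1].

(* Such j necessarily satisfies
   2j - 1 <= n (the parts 1..2j-1 are present), so j ranges over 'I_n.+1 *)
Definition cond_b (n : nat) (m : mtype n) : bool :=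
  [exists j : 'I_n.+1,
     (0 < j) &&
     [forall k : 'I_n.+1, ((1 <= k <= (2 * j).-1) ==> (2 <= mult m k))
                          && ((2 * j < k) ==> (mult m k <= 1))]].

Definition c1 (n : nat) : nat :=
  #|[set m : mtype n | is_partition m && (all_distinct m || cond_b m)]|.

(* Main.v *)
Require Import Defs.
From mathcomp Require Import all_boot all_algebra.
From mathcomp Require Import zify ring.
Set Implicit Arguments. Unset Strict Implicit. Unset Printing Implicit Defensive.
Import GRing.Theory.
Local Open Scope ring_scope.

Notation F2 := 'F_2.
Notation PF := {poly 'F_2}.

Lemma F2_add_self (x : F2) : x + x = 0.
Proof. by case: x => [[|[|]]] // ?; apply/val_inj. Qed.

Lemma PF_add_self (p : PF) : p + p = 0.
Proof. by apply/polyP => i; rewrite coefD coef0 F2_add_self. Qed.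

Lemma sqr1X (p : PF) : (1 + p) * (1 + p) = 1 + p * p.
Proof.
have h := PF_add_self p.
have -> : (1 + p) * (1 + p) = 1 + p * p + (p + p) by ring.
by rewrite h addr0.
Qed.

Definition eqm (m : nat) (p q : PF) := forall i, (i < m)%N -> p`_i = q`_i.

Lemma eqm_refl m p : eqm m p p. Proof. by []. Qed.
Lemma eqm_sym m p q : eqm m p q -> eqm m q p.
Proof. by move=> h i hi; rewrite h. Qed.
Lemma eqm_trans m p q r : eqm m p q -> eqm m q r -> eqm m p r.
Proof. by move=> h1 h2 i hi; rewrite h1 // h2. Qed.
Lemma eqm_le m m' p q : (m' <= m)%N -> eqm m p q -> eqm m' p q.
Proof. by move=> hm h i hi; apply: h; apply: leq_trans hm. Qed.
Lemma eqmD m p p' q q' : eqm m p p' -> eqm m q q' -> eqm m (p + q) (p' + q').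
Proof. by move=> h1 h2 i hi; rewrite !coefD h1 // h2. Qed.
Lemma eqmM m p p' q q' : eqm m p p' -> eqm m q q' -> eqm m (p * q) (p' * q').
Proof.
move=> h1 h2 i hi; rewrite !coefM; apply: eq_bigr => j _.
rewrite h1; last by apply: leq_ltn_trans hi; rewrite -ltnS.
by rewrite h2 //; apply: leq_ltn_trans hi; apply: leq_subr.
Qed.

Lemma eqm_sum m (I : finType) (P : pred I) (F G : I -> PF) :
  (forall i, P i -> eqm m (F i) (G i)) ->
  eqm m (\sum_(i | P i) F i) (\sum_(i | P i) G i).
Proof.
move=> h; apply: (big_ind2 (eqm m)) => //; first by move=> *; apply: eqmD.
Qed.

Lemma eqm_prod m (I : finType) (P : pred I) (F G : I -> PF) :
  (forall i, P i -> eqm m (F i) (G i)) ->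
  eqm m (\prod_(i | P i) F i) (\prod_(i | P i) G i).
Proof.
move=> h; apply: (big_ind2 (eqm m)) => //; first by move=> *; apply: eqmM.
Qed.

Lemma eqmX0 m a p : (m <= a)%N -> eqm m ('X^a * p) 0.
Proof.
move=> ha i hi; rewrite coefXnM coef0.
by rewrite (leq_trans hi ha).
Qed.

Lemma eqm_shift m a p q : eqm m p q -> eqm (a + m) ('X^a * p) ('X^a * q).
Proof.
move=> h i hi; rewrite !coefXnM; case: ltnP => // hai.
by apply: h; rewrite ltn_subLR.
Qed.

Lemma eqm_unshift m a p q : eqm (a + m) ('X^a * p) ('X^a * q) -> eqm m p q.
Proof.
move=> h i hi; have := h (a + i)%N; rewrite !coefXnM.
have -> : (a + i < a)%N = false by rewrite ltnNge leq_addr.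
by rewrite addKn; apply; rewrite ltn_add2l.
Qed.

Lemma eqm_shiftl m a p q : eqm m p q -> eqm m ('X^a * p) ('X^a * q).
Proof. by move=> h; exact: (eqm_le (leq_addl a m) (eqm_shift (a:=a) h)). Qed.

Lemma eqm_weak m m' p q : eqm m p q -> (m' <= m)%N -> eqm m' p q.
Proof. by move=> h hm; exact: (eqm_le hm h). Qed.

Definition Pp (s t : nat) : PF := \prod_(i < t) (1 + 'X^(s * i.+1)).

Fixpoint qb (s M t : nat) {struct M} : PF :=
  match M, t with
  | _, 0 => 1
  | 0, _.+1 => 0
  | M'.+1, t'.+1 => qb s M' t' + 'X^(s * t) * qb s M' t
  end.

Lemma qb0 s M : qb s M 0 = 1. Proof. by case: M. Qed.
Lemma qbS s M t : qb s M.+1 t.+1 = qb s M t + 'X^(s * t.+1) * qb s M t.+1.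
Proof. by []. Qed.

Lemma qb_gt s M t : (M < t)%N -> qb s M t = 0.
Proof.
elim: M t => [|M IH] [|t] //= ht.
by rewrite !IH ?mulr0 ?addr0 // ltnW.
Qed.

Lemma qbB s M t :
  qb s M.+1 t.+1 = 'X^(s * (M - t)) * qb s M t + qb s M t.+1.
Proof.
elim: M t => [|M IH] t.
  rewrite qbS sub0n muln0 expr0 mul1r /=. case: t => //= *; ring.
case: t => [|t].
  rewrite qbS !qb0 [in LHS]IH [in RHS]qbS !qb0 subn0 mulr1.
  have -> : 'X^(s * M.+1) = 'X^(s * 1) * 'X^(s * M) :> PF.
    by rewrite -exprD -mulnDr.
  rewrite muln1; ring.
rewrite qbS [in LHS]IH [in LHS](IH t.+1) [in RHS]qbS [in RHS](qbS s M t.+1) subSS.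
case: (leqP t.+1 M) => htM.
  have e1 : 'X^(s * t.+2) * ('X^(s * (M - t.+1)) * qb s M t.+1) =
            'X^(s * (M - t)) * ('X^(s * t.+1) * qb s M t.+1) :> PF.
    rewrite !mulrA -!exprD -!mulnDr; congr ('X^(s * _) * _); lia.
  rewrite mulrDr e1; ring.
rewrite (@qb_gt s M t.+1) // !mulr0; ring.
Qed.

Lemma qb_trunc s M t : (t <= M)%N -> eqm (s * (M - t).+1) (qb s M t * Pp s t) 1.
Proof.
elim: M t => [|M IH] [|t] //.
- by rewrite /Pp big_ord0 qb0 mulr1.
- by rewrite /Pp big_ord0 qb0 mulr1.
move=> ht; rewrite ltnS in ht.
rewrite qbS /Pp big_ord_recr /= -/(Pp s t) subSS.
set Y : PF := 'X^(s * t.+1).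
have -> : (qb s M t + Y * qb s M t.+1) * (Pp s t * (1 + Y)) =
          (qb s M t * Pp s t) * (1 + Y) + Y * (qb s M t.+1 * (Pp s t * (1 + Y))).
  ring.
have h1 : eqm (s * (M - t).+1) ((qb s M t * Pp s t) * (1 + Y)) (1 + Y).
  by rewrite -{2}(mul1r (1 + Y)); apply: eqmM => //; apply: IH.
have h2 : eqm (s * (M - t).+1) (Y * (qb s M t.+1 * (Pp s t * (1 + Y)))) Y.
  case: (leqP t.+1 M) => htM.
    have := IH _ htM; rewrite /Pp big_ord_recr /= -/(Pp s t) => h.
    rewrite /Y -[X in eqm _ _ X]mulr1.
    have h' := eqm_shift (a := s * t.+1) h.
    have hle : (s * (M - t).+1 <= s * t.+1 + s * (M - t.+1).+1)%N.
      rewrite -mulnDr leq_mul2l; apply/orP; right; lia.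
    exact: (eqm_le hle h').
  have -> : t = M by lia.
  rewrite qb_gt // mul0r mulr0; move=> i hi.
  rewrite coef0 /Y coefXn; case: eqP hi => // ->; rewrite subnn muln1 ltnNge leq_pmulr //.
have := eqmD h1 h2; rewrite -addrA PF_add_self addr0 => h.
exact: h.
Qed.

Fixpoint tri (t : nat) : nat := if t is t'.+1 then (tri t' + t)%N else 0%N.

Lemma euler s M : \sum_(t < M.+1) 'X^(s * tri t) * qb s M t = Pp s M.
Proof.
elim: M => [|M IH].
  by rewrite big_ord_recl big_ord0 /Pp big_ord0 /= muln0 expr0 mul1r addr0.
rewrite [RHS]/Pp [RHS]big_ord_recr /= -/(Pp s M) -IH.
rewrite big_ord_recl /= muln0 expr0 ?qb0 mul1r.
under eq_bigr => i _ do rewrite add0n -[bump 0 i]/(i.+1) -qbS qbB mulrDr.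
rewrite big_split /= mulrDr mulr1.
set Sa := \sum_(i < M.+1) ('X^(s * (tri i + i.+1)) * ('X^(s * (M - i)) * qb s M i)).
set Sb := \sum_(i < M.+1) ('X^(s * (tri i + i.+1)) * qb s M i.+1).
rewrite [Sa + Sb]addrC addrA; congr (_ + _); last first.
  rewrite /Sa mulr_suml; apply: eq_bigr => i _.
  rewrite mulrA -!exprD mulrAC -exprD; congr ('X^_ * _).
  rewrite -!mulnDr; congr (s * _).
  have := ltn_ord i; rewrite /=; move: (nat_of_ord i) => k hk.
  rewrite /= addnS; lia.
rewrite [RHS](big_ord_recl) /= muln0 expr0 ?qb0 mul1r; congr (_ + _).
rewrite /Sb big_ord_recr /= qb_gt // mulr0 addr0.
by apply: eq_bigr => i _.
Qed.

Definition fJ (N j : nat) : nat := locked (j + 2 * ((j - N) + (N - j)) ^ 2)%N.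

Lemma fJa N j : (j <= 2 * N)%N -> (fJ N.+1 j.+2 + 4 * (2 * N - j) = 4 * N + 4 + fJ N j)%N.
Proof. rewrite /fJ -!lock => h; case: (leqP N j) => h2; case: (leqP N.+1 j.+2) => h3; nia. Qed.
Lemma fJb N j : (fJ N.+1 j.+2 = fJ N j.+1 + 1)%N.
Proof. rewrite /fJ -!lock; case: (leqP N j) => h2; nia. Qed.
Lemma fJc N j : (j.+1 <= 2 * N)%N -> (fJ N.+1 j.+2 + 4 * j.+2 + 4 * (2 * N - j.+1) = 8 * N + 5 + fJ N j.+1)%N.
Proof. rewrite /fJ -!lock => h; case: (leqP N j) => h2; nia. Qed.
Lemma fJd N j : (fJ N.+1 j.+2 + 4 * j.+2 = 4 * N + 2 + fJ N j.+2)%N.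
Proof. rewrite /fJ -!lock; case: (leqP N j) => h2; nia. Qed.

Definition AJ (s N j : nat) : PF := 'X^(fJ N j) * qb s (2 * N) j.

Lemma Xq_eq s N a b k : ((k <= 2 * N)%N -> a = b) ->
  'X^a * qb s (2 * N) k = 'X^b * qb s (2 * N) k.
Proof. by case: (leqP k (2 * N)) => h e; [rewrite e | rewrite qb_gt // !mulr0]. Qed.

Lemma two_succ N : (2 * N.+1 = (2 * N).+2)%N. Proof. lia. Qed.

Lemma AJ0 s N : s = 4%N -> AJ s N.+1 0 = 'X^(4 * N + 2) * AJ s N 0.
Proof.
move=> hs; rewrite /AJ !qb0 !mulr1 -exprD; congr ('X^_); rewrite /fJ -!lock; nia.
Qed.

Lemma AJ1 s N : s = 4%N ->
  AJ s N.+1 1 = 'X^(4 * N + 2) * AJ s N 1 + ('X + 'X^(8 * N + 5)) * AJ s N 0.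
Proof.
move=> hs; rewrite /AJ two_succ qbS qb0 qbB qb0 subn0 !mulr1.
set q := qb s (2 * N) 1.
have e1 : 'X^(fJ N.+1 1) * 'X^(s * 1) = 'X^(4 * N + 2) * 'X^(fJ N 1) :> PF.
  by rewrite -!exprD; congr ('X^_); rewrite /fJ -!lock hs; nia.
have e2 : 'X^(fJ N.+1 1) * 'X^(s * 1) * 'X^(s * (2 * N)) = 'X^(8 * N + 5) * 'X^(fJ N 0) :> PF.
  by rewrite -!exprD; congr ('X^_); rewrite /fJ -!lock hs; nia.
have e3 : 'X^(fJ N.+1 1) = 'X * 'X^(fJ N 0) :> PF.
  by rewrite -exprS; congr ('X^_); rewrite /fJ -!lock; nia.
rewrite !mulrDr !mulrA mulr1 e2 e1 e3; ring.
Qed.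

Lemma AJ2 s N j : s = 4%N ->
  AJ s N.+1 j.+2 = 'X^(4 * N + 2) * AJ s N j.+2 + ('X + 'X^(8 * N + 5)) * AJ s N j.+1
                   + 'X^(4 * N + 4) * AJ s N j.
Proof.
move=> hs; rewrite /AJ two_succ qbS !qbB.
rewrite !mulrDr !mulrA -!exprD mulrDl -exprS -!exprD.
rewrite (@Xq_eq s N (fJ N.+1 j.+2 + s * (2 * N - j)) (4 * N + 4 + fJ N j)); last first.
  by move=> h; rewrite hs; apply: fJa.
rewrite (@Xq_eq s N (fJ N.+1 j.+2 + s * j.+2 + s * (2 * N - j.+1)) (8 * N + 5 + fJ N j.+1)); last first.
  by move=> h; rewrite hs; apply: fJc.
rewrite (@Xq_eq s N (fJ N.+1 j.+2 + s * j.+2) (4 * N + 2 + fJ N j.+2)); last first.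
  by move=> h; rewrite hs; apply: fJd.
rewrite (@Xq_eq s N (fJ N.+1 j.+2) (fJ N j.+1).+1); last first.
  by move=> h; rewrite fJb addn1.
ring.
Qed.

Definition Od (N : nat) : PF := \prod_(i < N) ((1 + 'X^(4 * i + 3)) * (1 + 'X^(4 * i + 1))).

Lemma AJ_big s N K : (2 * N < K)%N ->
  \sum_(j < K) AJ s N j = \sum_(j < (2 * N).+1) AJ s N j.
Proof.
move=> hK; rewrite -!(big_mkord xpredT) (@big_cat_nat _ _ _ (2 * N).+1 0 K _ _ (leq0n _) hK) /=.
rewrite [X in _ + X]big1_seq ?addr0 // => j /andP [_]; rewrite mem_iota => /andP [h1 _].
by rewrite /AJ qb_gt ?mulr0.
Qed.

Lemma jtp N : 'X^N * Od N = \sum_(j < (2 * N).+1) AJ 4 N j.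
Proof.
elim: N => [|N IH].
  rewrite /Od big_ord0 big_ord1 /AJ expr0 qb0 mulr1 /fJ -lock /=.
  rewrite mulr1; have -> : (0 + 2 * (0 - 0 + (0 - 0)) ^ 2 = 0)%N by [].
  by rewrite expr0.
rewrite /Od (big_ord_recr N) /= -/(Od N) two_succ.
rewrite big_ord_recl big_ord_recl /=.
under eq_bigr => i _ do rewrite /bump /= (AJ2 _ _ (erefl 4%N)).
rewrite -[bump 0 0]/1%N (AJ0 _ (erefl 4%N)) (AJ1 _ (erefl 4%N)).
rewrite !big_split /= -!mulr_sumr.
set c0 : PF := 'X^(4 * N + 2).
set c1 : PF := 'X + 'X^(8 * N + 5).
set c2 : PF := 'X^(4 * N + 4).
set S := \sum_(i < (2 * N).+1) AJ 4 N i.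
set A0 := AJ 4 N 0; set A1 := AJ 4 N 1.
set T2 := \sum_(i < (2 * N).+1) AJ 4 N i.+2.
set T1 := \sum_(i < (2 * N).+1) AJ 4 N i.+1.
have h2 : A0 + (A1 + T2) = S.
  have hK : (2 * N < (2 * N).+3)%N by lia.
  by rewrite /S -(AJ_big _ hK) big_ord_recl big_ord_recl.
have h1 : A0 + T1 = S.
  have hK : (2 * N < (2 * N).+2)%N by lia.
  by rewrite /S -(AJ_big _ hK) big_ord_recl.
have hc : 'X * ((1 + 'X^(4 * N + 3)) * (1 + 'X^(4 * N + 1))) = c0 + c1 + c2 :> PF.
  rewrite /c0 /c1 /c2; set Y : PF := 'X^(4 * N + 1).
  have -> : 'X^(4 * N + 3) = 'X * ('X * Y) :> PF by rewrite /Y -!exprS; congr ('X^_); lia.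
  have -> : 'X^(4 * N + 2) = 'X * Y :> PF by rewrite /Y -!exprS; congr ('X^_); lia.
  have -> : 'X^(4 * N + 4) = 'X * ('X * ('X * Y)) :> PF by rewrite /Y -!exprS; congr ('X^_); lia.
  have -> : 'X^(8 * N + 5) = 'X * ('X * ('X * (Y * Y))) :> PF.
    by rewrite /Y -exprD -!exprS; congr ('X^_); lia.
  ring.
have -> : 'X^(N.+1) * (Od N * ((1 + 'X^(4 * N + 3)) * (1 + 'X^(4 * N + 1)))) =
  ('X^N * Od N) * ('X * ((1 + 'X^(4 * N + 3)) * (1 + 'X^(4 * N + 1)))) :> PF.
  by rewrite exprSr; ring.
rewrite IH -/S hc.
have -> : S * (c0 + c1 + c2) = c0 * (A0 + (A1 + T2)) + c1 * (A0 + T1) + c2 * S.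
  by rewrite h1 h2; ring.
ring.
Qed.

Lemma eqm1X m a : (m <= a)%N -> eqm m (1 + 'X^a) 1.
Proof.
move=> ha i hi; rewrite coefD coefXn.
have -> : (i == a) = false by apply/negbTE; rewrite neq_ltn (leq_trans hi ha).
by rewrite addr0.
Qed.

Lemma Pp_ext s t K : (t <= K)%N -> eqm (s * t.+1) (Pp s K) (Pp s t).
Proof.
elim: K => [|K IH] hK.
  by move: hK; rewrite leqn0 => /eqP ->.
case: (ltnP t K.+1) => htK; last first.
  by have -> : t = K.+1 by apply/eqP; rewrite eqn_leq hK.
rewrite /Pp big_ord_recr /= -/(Pp s K) -[X in eqm _ _ X]mulr1.
apply: eqmM; first by apply: IH.
by apply: eqm1X; rewrite leq_mul2l; apply/orP; right; lia.
Qed.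

Lemma qb_trunc2 s M t : (t <= M)%N ->
  eqm (s * minn (M - t).+1 t.+1) (qb s M t * Pp s M) 1.
Proof.
move=> ht; apply: (@eqm_trans _ _ (qb s M t * Pp s t)).
  refine (eqm_weak (eqmM (@eqm_refl _ (qb s M t)) (Pp_ext (s:=s) ht)) _).
  by rewrite leq_mul2l geq_minr orbT.
refine (eqm_weak (qb_trunc (s:=s) ht) _).
by rewrite leq_mul2l geq_minl orbT.
Qed.

Lemma fJ_ge N j : (N <= fJ N j)%N.
Proof. rewrite /fJ -lock; case: (leqP N j) => h; nia. Qed.

Lemma fJ_big N j : (j <= 2 * N)%N ->
  (N + N.+1 <= fJ N j + 4 * minn (2 * N - j).+1 j.+1)%N.
Proof.
rewrite /fJ -lock => h; case: (leqP N j) => h2.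
  have -> : minn (2 * N - j).+1 j.+1 = (2 * N - j).+1 by apply/minn_idPl; lia.
  nia.
have -> : minn (2 * N - j).+1 j.+1 = j.+1 by apply/minn_idPr; lia.
nia.
Qed.

Definition gJ N j := (fJ N j - N)%N.

Lemma jtp_trunc N :
  eqm N.+1 (Od N * Pp 4 (2 * N)) (\sum_(j < (2 * N).+1) 'X^(gJ N j)).
Proof.
apply: (@eqm_unshift _ N).
have -> : 'X^N * \sum_(j < (2 * N).+1) 'X^(gJ N j) = \sum_(j < (2 * N).+1) 'X^(fJ N j) :> PF.
  rewrite mulr_sumr; apply: eq_bigr => j _; rewrite -exprD /gJ subnKC //.
  exact: fJ_ge.
rewrite mulrA jtp mulr_suml.
apply: eqm_sum => j _.
rewrite /AJ -mulrA -[X in eqm _ _ X]mulr1.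
have hj : (j <= 2 * N)%N by rewrite -ltnS.
have := eqm_shift (a := fJ N j) (qb_trunc2 (s:=4) hj).
by move=> h; refine (eqm_weak h _); apply: fJ_big.
Qed.

Definition Oalt (K : nat) : PF := \prod_(i < K) (1 + 'X^(2 * i + 1)).

Lemma Pp_split K : Pp 1 (2 * K) = Oalt K * Pp 2 K.
Proof.
elim: K => [|K IH]; first by rewrite /Pp /Oalt !big_ord0 mulr1.
rewrite two_succ /Pp !big_ord_recr /= -/(Pp 1 (2 * K)) IH /Oalt big_ord_recr /=.
rewrite -/(Oalt K) -/(Pp 2 K) !mul1n.
have -> : ((2 * K).+2 = 2 * K.+1)%N by lia.
have -> : ((2 * K).+1 = 2 * K + 1)%N by lia.
ring.
Qed.

Lemma Oalt_Od N : Oalt (2 * N) = Od N.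
Proof.
elim: N => [|N IH]; first by rewrite /Oalt /Od !big_ord0.
rewrite two_succ /Oalt !big_ord_recr /= -/(Oalt (2 * N)) IH /Od big_ord_recr /= -/(Od N).
have -> : (2 * (2 * N) + 1 = 4 * N + 1)%N by lia.
have -> : (2 * (2 * N).+1 + 1 = 4 * N + 3)%N by lia.
ring.
Qed.

Lemma Pp_sq s K : Pp s K * Pp s K = Pp (2 * s) K.
Proof.
rewrite /Pp -big_split /=; apply: eq_bigr => i _.
rewrite sqr1X -exprD; congr (1 + 'X^_); lia.
Qed.

Lemma prod_side n : eqm n.+1 (Pp 1 n * Pp 2 n) (Od n * Pp 4 (2 * n)).
Proof.
have h1 : eqm n.+1 (Pp 1 n) (Pp 1 (4 * n)).
  apply: eqm_sym; rewrite -[n.+1]mul1n; apply: Pp_ext; lia.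
have h2 : eqm n.+1 (Pp 2 n) (Pp 2 (2 * n)).
  apply: eqm_sym; refine (eqm_weak (Pp_ext (s:=2) _) _); lia.
apply: eqm_trans (eqmM h1 h2) _.
have -> : (4 * n = 2 * (2 * n))%N by lia.
rewrite Pp_split Oalt_Od -mulrA Pp_sq.
by [].
Qed.

Definition hfac (n t : nat) (i : 'I_n) : PF :=
  \sum_(a < n.+1 | if (i < t)%N then (2 <= a)%N else (a <= 1)%N) 'X^(i.+1 * a).
Arguments hfac : clear implicits.
Definition Hpoly (n t : nat) : PF := \prod_(i < n) hfac n t i.

Lemma geo2 (x : PF) K :
  (\sum_(a < K | (2 <= a)%N) x ^+ a) * (1 + x) = if (2 <= K)%N then x ^+ 2 + x ^+ K else 0.
Proof.
elim: K => [|K IH]; first by rewrite big_ord0 mul0r.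
rewrite big_mkcond big_ord_recr /= -big_mkcond /= mulrDl IH.
case: (ltnP K 2) => hK.
  case: K hK IH => [|[|K]] //= _ _; rewrite ?mul0r ?addr0 //.
  by rewrite PF_add_self.
have -> : (1 < K.+1)%N by lia.
rewrite [x ^+ K.+1]exprS; set y := x ^+ K.
have -> : x ^+ 2 + y + y * (1 + x) = x ^+ 2 + x * y + (y + y) by ring.
by rewrite PF_add_self addr0.
Qed.

Lemma hfac_lt n t (i : 'I_n) : (i < t)%N ->
  eqm n.+1 (hfac n t i * (1 + 'X^(i.+1))) ('X^(2 * i.+1)).
Proof.
move=> hit.
have E : hfac n t i * (1 + 'X^(i.+1)) = 'X^(i.+1 * 2) + 'X^(i.+1 * n.+1).
  rewrite /hfac.
  under eq_bigl => a do rewrite hit.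
  under eq_bigr => a _ do rewrite exprM.
  rewrite geo2 ifT; last by have := ltn_ord i; lia.
  by rewrite -!exprM.
rewrite E -[X in eqm _ _ X]addr0; apply: eqmD.
  by rewrite mulnC.
rewrite -[X in eqm _ X _]mulr1; refine (eqmX0 _ _); by rewrite leq_pmull.
Qed.

Lemma hfac_ge n t (i : 'I_n) : ~~ (i < t)%N -> hfac n t i = 1 + 'X^(i.+1).
Proof.
move=> hit; rewrite /hfac.
under eq_bigl => a do rewrite (negbTE hit).
have hn : (1 < n.+1)%N by have := ltn_ord i; lia.
rewrite big_mkcond /=.
case: n i hit hn => [[]//|n] i hit hn.
by rewrite big_ord_recl big_ord_recl /= big1 ?addr0 ?muln0 ?muln1 ?expr0.
Qed.

Lemma eqm_sum_seq m (I : Type) (r : seq I) (P : pred I) (F G : I -> PF) :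
  (forall i, P i -> eqm m (F i) (G i)) ->
  eqm m (\sum_(i <- r | P i) F i) (\sum_(i <- r | P i) G i).
Proof.
move=> h; apply: (big_ind2 (eqm m)) => //; first by move=> *; apply: eqmD.
Qed.

Lemma tri2 t : (2 * tri t = t * t.+1)%N.
Proof. elim: t => [|t IH] //=; rewrite mulnDr IH; lia. Qed.

Lemma prod_cond n t (F : nat -> PF) : (t <= n)%N ->
  \prod_(i < t) F i = \prod_(i < n) (if (i < t)%N then F i else 1).
Proof. by move=> ht; rewrite (big_ord_widen n F ht) big_mkcond. Qed.

Lemma Xtri t : 'X^(2 * tri t) = \prod_(i < t) 'X^(2 * i.+1) :> PF.
Proof.
elim: t => [|t IH]; first by rewrite big_ord0 muln0 expr0.
by rewrite big_ord_recr /= -IH -exprD mulnDr.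
Qed.

Lemma Hpoly_mul n t : (t <= n)%N ->
  eqm n.+1 (Hpoly n t * Pp 2 t) ('X^(2 * tri t) * Pp 1 n).
Proof.
move=> ht.
have -> : Hpoly n t * Pp 2 t =
  \prod_(i < n) (hfac n t i * (if (i < t)%N then 1 + 'X^(2 * i.+1) else 1)).
  by rewrite /Pp (prod_cond (fun i => 1 + 'X^(2 * i.+1)) ht) /Hpoly -big_split.
have -> : 'X^(2 * tri t) * Pp 1 n =
  \prod_(i < n) ((if (i < t)%N then 'X^(2 * i.+1) else 1) * (1 + 'X^(i.+1))).
  rewrite Xtri (prod_cond (fun i => 'X^(2 * i.+1)) ht) /Pp -big_split /=.
  by apply: eq_bigr => i _; rewrite mul1n.
apply: eqm_prod => i _; case: (ltnP i t) => h.
  have -> : hfac n t i * (1 + 'X^(2 * i.+1)) =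
            (hfac n t i * (1 + 'X^(i.+1))) * (1 + 'X^(i.+1)).
    by rewrite -mulrA sqr1X -exprD addnn -mul2n.
  exact (eqmM (hfac_lt h) (@eqm_refl _ _)).
rewrite hfac_ge ?mulr1 ?mul1r //; by rewrite -leqNgt.
Qed.

Lemma Hsum n : eqm n.+1 (\sum_(t < n.+1) Hpoly n t) (Pp 1 n * Pp 2 n).
Proof.
have s1 : eqm n.+1 (\sum_(t < n.+1) Hpoly n t)
                   (\sum_(t < n.+1) 'X^(2 * tri t) * Pp 1 n * qb 2 (2 * n) t).
  apply: eqm_sum => t _.
  have ht : (t <= n)%N by rewrite -ltnS.
  have ht2 : (t <= 2 * n)%N by lia.
  have q := qb_trunc (s := 2) ht2.
  have q' : eqm n.+1 (qb 2 (2 * n) t * Pp 2 t) 1.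
    by refine (eqm_weak q _); lia.
  have e1 := eqmM (@eqm_refl n.+1 (Hpoly n t)) q'.
  rewrite mulr1 in e1.
  apply: eqm_trans (eqm_sym e1) _.
  have -> : Hpoly n t * (qb 2 (2 * n) t * Pp 2 t) = (Hpoly n t * Pp 2 t) * qb 2 (2 * n) t.
    by ring.
  exact (eqmM (Hpoly_mul ht) (@eqm_refl _ _)).
apply: eqm_trans s1 _.
have -> : \sum_(t < n.+1) 'X^(2 * tri t) * Pp 1 n * qb 2 (2 * n) t =
          Pp 1 n * \sum_(t < n.+1) 'X^(2 * tri t) * qb 2 (2 * n) t.
  by rewrite mulr_sumr; apply: eq_bigr => t _; rewrite mulrCA mulrA.
apply: eqmM; first by [].
have s3 : eqm n.+1 (\sum_(t < n.+1) 'X^(2 * tri t) * qb 2 (2 * n) t) (Pp 2 (2 * n)).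
  rewrite -(euler 2 (2 * n)).
  have hn : ((2 * n).+1 = n.+1 + n)%N by lia.
  have h0 : forall G : 'I_n -> nat, (forall j, n.+1 <= G j)%N ->
      eqm n.+1 (\sum_(j < n) 'X^(2 * tri (G j)) * qb 2 (2 * n) (G j)) 0.
    move=> G hG.
    have E0 : \sum_(j < n) (0 : PF) = 0 by rewrite big1.
    have h := @eqm_sum n.+1 _ xpredT (fun j => 'X^(2 * tri (G j)) * qb 2 (2 * n) (G j))
                 (fun _ => 0) (fun j _ => eqmX0 _ _).
    rewrite E0 in h; apply: h.
    move=> j; rewrite tri2; have := hG j; nia.
  rewrite hn big_split_ord.
  rewrite -[X in eqm _ X _]addr0; apply: eqmD; first by [].
  apply: eqm_sym; apply: (h0 (fun j => rshift n.+1 j)) => j /=; lia.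
apply: eqm_trans s3 _.
refine (eqm_weak (Pp_ext (s:=2) _) _); lia.
Qed.

Definition good n t (m : mtype n) : bool :=
  [forall i : 'I_n, if (i < t)%N then (2 <= m i)%N else (m i <= 1)%N].

Lemma sum_ind (T : finType) (A b : pred T) :
  \sum_(f | A f) ((b f)%:R : F2) = (#|[pred f | A f && b f]|)%:R.
Proof.
rewrite -sum1_card natr_sum big_mkcondr /=; apply: eq_bigr => f _.
by case: (b f).
Qed.

Lemma count_H n t :
  ((#|[set m : mtype n | is_partition m && good t m]|)%:R : F2) = (Hpoly n t)`_n.
Proof.
rewrite /Hpoly /hfac.
rewrite (bigA_distr_big_dep _ (fun (i : 'I_n) (a : 'I_n.+1) => 'X^(i.+1 * a))).
rewrite coef_sum.
under eq_bigr => f _ do rewrite prodrXr coefXn.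
rewrite sum_ind; congr (_%:R); apply: eq_card => m.
rewrite !inE /is_partition /good andbC; congr (_ && _); first by rewrite eq_sym.
Qed.

Lemma multE n (m : mtype n) (i : 'I_n) : mult m i.+1 = m i.
Proof.
rewrite /mult /=; case: insubP => [j _ hj | h]; last by rewrite ltn_ord in h.
by congr (nat_of_ord (m _)); apply: val_inj.
Qed.

Lemma multE' n (m : mtype n) (k : nat) (hk : (k.-1 < n)%N) : (0 < k)%N ->
  mult m k = m (Ordinal hk).
Proof. by case: k hk => // k hk _; rewrite -(multE m (Ordinal hk)). Qed.

Lemma good_uniq n (m : mtype n) (t1 t2 : nat) :
  (t1 <= n)%N -> (t2 <= n)%N -> good t1 m -> good t2 m -> t1 = t2.
Proof.
wlog h12 : t1 t2 / (t1 <= t2)%N.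
  move=> W h1 h2 g1 g2; case: (leqP t1 t2) => h.
    exact: W.
  by apply/esym; apply: W => //; apply: ltnW.
move=> h1 h2 /forallP g1 /forallP g2; apply/eqP; rewrite eqn_leq h12 /=.
rewrite leqNgt; apply/negP => hlt.
have hi : (t1 < n)%N by apply: leq_trans hlt h2.
have := g1 (Ordinal hi); have := g2 (Ordinal hi); rewrite /= hlt ltnn.
lia.
Qed.

Lemma cond_equiv n (m : mtype n) :
  (all_distinct m || cond_b m) = [exists t : 'I_n.+1, good t m].
Proof.
apply/idP/idP.
  case/orP.
    move=> /forallP h; apply/existsP; exists ord0; apply/forallP => i /=.
    exact: h.
  case/existsP => j /andP [hj /forallP hk].
  case: (boolP ((2 * j <= n)%N && (2 <= mult m (2 * j))%N)) => [/andP [hb1 hb2] | hb].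
    have htn : ((2 * j) < n.+1)%N by [].
    apply/existsP; exists (Ordinal htn); apply/forallP => i /=.
    have hin := ltn_ord i.
    have hki : (i.+1 < n.+1)%N by [].
    have := hk (Ordinal hki); rewrite /= multE => /andP [hA hB].
    case: ifP => hit.
      case: (leqP i.+1 (2 * j).-1) => h1.
        by apply: (implyP hA); rewrite h1.
      have e : i.+1 = (2 * j)%N by lia.
      by rewrite -(multE m i) e.
    by apply: (implyP hB); lia.
  have htn : (minn (2 * j).-1 n < n.+1)%N by rewrite ltnS geq_minr.
  apply/existsP; exists (Ordinal htn); apply/forallP => i.
  have hin := ltn_ord i.
  have hki : (i.+1 < n.+1)%N by [].
  have := hk (Ordinal hki); rewrite /= multE => /andP [hA hB].
  change (if (i < minn (2 * j).-1 n)%N then (2 <= m i)%N else (m i <= 1)%N).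
  case: (ltnP (2 * j).-1 n) => hc.
    case: ifP => hit.
      by apply: (implyP hA); lia.
    case: (ltnP (2 * j) i.+1) => h1; first by apply: (implyP hB).
    have e : i.+1 = (2 * j)%N by lia.
    move: hb; rewrite -e (multE m i) hin /= -leqNgt; lia.
  rewrite hin.
  by apply: (implyP hA); lia.
case/existsP => t /forallP ht.
case: (posnP t) => [t0 | tpos].
  apply/orP; left; apply/forallP => i; have := ht i.
  by rewrite t0 ltn0.
apply/orP; right.
have tn := ltn_ord t.
have hj : ((t.+1 %/ 2) < n.+1)%N.
  lia.
apply/existsP; exists (Ordinal hj) => /=.
have hjt : ((2 * (t.+1 %/ 2)).-1 <= t <= 2 * (t.+1 %/ 2))%N.
  lia.
move/andP: hjt => [hj1 hj2].
apply/andP; split; first by lia.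
apply/forallP => k; apply/andP; split; apply/implyP.
  move=> /andP [hk1 hk2].
  have hkn : (k.-1 < n)%N by have := ltn_ord k; lia.
  rewrite (multE' m hkn) //.
  by have := ht (Ordinal hkn); rewrite /= (_ : (k.-1 < t)%N = true) //; lia.
move=> hk.
have hkn : (k.-1 < n)%N by have := ltn_ord k; lia.
rewrite (multE' m hkn); last by lia.
by have := ht (Ordinal hkn); rewrite /= (_ : (k.-1 < t)%N = false) //; lia.
Qed.

Lemma c1_sum n : c1 n = (\sum_(t < n.+1) #|[set m : mtype n | is_partition m && good t m]|)%N.
Proof.
rewrite /c1.
have hc : forall (T : finType) (A : {pred T}), #|A| = (\sum_(x : T) ((x \in A) : nat))%N.
  by move=> T A; rewrite -sum1_card big_mkcond.
rewrite hc; under [in RHS]eq_bigr => t _ do rewrite hc.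
rewrite exchange_big /=; apply: eq_bigr => m _.
rewrite !inE cond_equiv.
case: (boolP [exists t : 'I_n.+1, good t m]) => [/existsP [t0 h0] | hne].
  rewrite (bigD1 t0) /=; last by [].
  rewrite big1; first by rewrite !inE h0 andbT addn0.
  move=> t ht; rewrite inE.
  case: (boolP (good t m)) => g; rewrite ?andbF //; exfalso; move/eqP: ht; apply.
  apply: val_inj; apply: (@good_uniq n m) => //; rewrite -ltnS; exact: ltn_ord.
rewrite andbF big1 // => t _; rewrite inE.
case: (boolP (good t m)) => g; rewrite ?andbF //.
by move/existsP: hne; case; exists t.
Qed.

Lemma c1_F2 n :
  ((c1 n)%:R : F2) = (#|[pred j : 'I_(2 * n).+1 | gJ n j == n]|)%:R.
Proof.
rewrite c1_sum natr_sum.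
under eq_bigr => t _ do rewrite count_H.
rewrite -coef_sum.
rewrite (Hsum (ltnSn n)) (prod_side (ltnSn n)) (jtp_trunc (ltnSn n)).
rewrite coef_sum.
under eq_bigr => j _ do rewrite coefXn eq_sym.
by rewrite (sum_ind xpredT); congr (_%:R); apply: eq_card => j.
Qed.

Lemma F2_odd a b : (a%:R : F2) = b%:R -> odd a = odd b.
Proof.
move/(congr1 (fun x : F2 => nat_of_ord x)); rewrite /= !val_Fp_nat // !modn2.
by case: (odd a); case: (odd b).
Qed.

Lemma tri_div k : tri k = (k * (k + 1) %/ 2)%N.
Proof. by rewrite addn1 -tri2 mulKn. Qed.

Lemma tri_inj : injective tri.
Proof.
move=> x y h; have := tri2 x; have := tri2 y; rewrite h => h1 h2.
case: (ltngtP x y) => // hxy; exfalso; nia.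
Qed.

Definition hJ n j := if (n <= j)%N then (2 * (j - n))%N else (2 * (n - j)).-1.

Lemma gJ_tri n j : gJ n j = tri (hJ n j).
Proof.
have key : forall y x, (2 * y = x * x.+1)%N -> tri x = y.
  move=> y x hx; have := tri2 x; rewrite -hx => /eqP; rewrite eqn_pmul2l //; by move/eqP.
apply/esym/key; rewrite /gJ /hJ /fJ -lock.
case: (leqP n j) => h; nia.
Qed.

Lemma hJ_inj n j1 j2 : hJ n j1 = hJ n j2 -> j1 = j2.
Proof. rewrite /hJ; case: (leqP n j1); case: (leqP n j2); lia. Qed.

Theorem theorem1_aux (n : nat) :
  odd (c1 n) <-> exists j : nat, n = ((j * (j + 1)) %/ 2)%N.
Proof.
rewrite (F2_odd (c1_F2 n)).
set A := [pred j : 'I_(2 * n).+1 | gJ n j == n].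
have le1 : (#|A| <= 1)%N.
  apply/card_le1_eqP => x y; rewrite !inE => /eqP hx /eqP hy.
  apply: val_inj; apply: (hJ_inj (n := n)); apply: tri_inj.
  by rewrite -!gJ_tri hx hy.
split.
  move=> ho.
  have : (0 < #|A|)%N by move: ho; case: #|A|.
  case/card_gt0P => j; rewrite inE => /eqP hj.
  exists (hJ n j); by rewrite -tri_div -gJ_tri hj.
move=> [k hk]; rewrite -tri_div in hk.
have hkn : (k <= n)%N by have := tri2 k; rewrite -hk; nia.
have : (0 < #|A|)%N.
  apply/card_gt0P.
  have hdk := divn_eq k 2; rewrite modn2 in hdk.
  case: (boolP (odd k)) => hodd.
    rewrite hodd /= in hdk.
    have hj : (n - k.+1 %/ 2 < (2 * n).+1)%N by lia.
    exists (Ordinal hj); rewrite inE gJ_tri /hJ /=.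
    have -> : (n <= n - k.+1 %/ 2)%N = false by lia.
    apply/eqP; rewrite hk; congr tri; lia.
  rewrite (negbTE hodd) /= in hdk.
  have hj : (n + k %/ 2 < (2 * n).+1)%N by lia.
  exists (Ordinal hj); rewrite inE gJ_tri /hJ /=.
  rewrite leq_addr; apply/eqP; rewrite hk; congr tri; lia.
by move: le1; case: #|A| => [|[|]].
Qed.

Local Close Scope ring_scope.

Theorem theorem1 (n : nat) :
  odd (c1 n) <-> exists j : nat, n = (j * (j + 1)) %/ 2.
Proof. exact: theorem1_aux. Qed.

Print Assumptions theorem1.
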